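(* Let $(\pi_k)_k$ be a sequence of paths in a finite directed multigraph $\Gamma$. If there is an edge $\zeta$ of $\Gamma$ such that the sequence $(|\pi_k|_\zeta)_k$ is unbounded, then there is a cycle $\gamma$ in $\Gamma$ such that the sequence $(|\pi_k|_{c(\gamma)})_k$ is unbounded.
   Context: For a path $\gamma$ in $\Gamma$, its support $c(\gamma)$ is the subgraph of $\Gamma$ induced by the edges traversed by $\gamma$. For a path $\pi$ and an edge $\zeta$, $|\pi|_\zeta$ is the number of times $\pi$ traverses $\zeta$; for a subgraph $\Gamma'$, $|\pi|_{\Gamma'}$ is the minimum of $|\pi|_\zeta$ over all edges $\zeta$ of $\Gamma'$. *)

(* Defs.v *)
From mathcomp Require Import all_boot.
Set Implicit Arguments. Unset Strict Implicit. Unset Printing Implicit Defensive.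

Record multigraph := Multigraph {
  vert : finType;
  edge : finType;
  src : edge -> vert;
  tgt : edge -> vert }.

Fixpoint is_path (G : multigraph) (s : seq (edge G)) : bool :=
  match s with
  | [::] => true
  | e :: s' => match s' with
               | [::] => true
               | f :: _ => (tgt e == src f) && is_path s'
               end
  end.

Definition is_cycle (G : multigraph) (s : seq (edge G)) : bool :=
  match s with
  | [::] => false
  | e :: s' => is_path s && (tgt (last e s') == src e)
  end.

Definition occ (G : multigraph) (pi : seq (edge G)) (z : edge G) : nat :=
  count_mem z pi.

Definition edge_support (G : multigraph) (gamma : seq (edge G)) : {set edge G} :=
  [set z | z \in gamma].

(* The neutral value [size pi] is an upper bound
   for every |pi|_zeta, so for nonempty S this is exactly the minimum. *)
Definition occ_sub (G : multigraph) (pi : seq (edge G)) (S : {set edge G}) : nat :=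
  \big[minn/size pi]_(z in S) occ pi z.

Definition unbounded (u : nat -> nat) : Prop := ~ (exists B, forall k, u k <= B).

(* Main.v *)
Require Import Defs.
From mathcomp Require Import all_boot.
From Stdlib Require Import Classical Lia.
From mathcomp Require Import zify.

Section S.
Variable G : multigraph.
Definition rr : rel (edge G) := fun e f => tgt e == src f.

Lemma is_pathE (s : seq (edge G)) : is_path s = sorted rr s.
Proof.
elim: s => [|e s IH] //; case: s IH => [|f s] // IH.
by rewrite -[is_path _]/((tgt e == src f) && is_path (f :: s)) IH.
Qed.

Lemma is_cycleE e (s : seq (edge G)) :
  is_cycle (e :: s) = sorted rr (e :: s) && rr (last e s) e.
Proof. by rewrite /is_cycle is_pathE. Qed.

Lemma cycle_sorted (g : seq (edge G)) : is_cycle g -> sorted rr g.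
Proof. by case: g => // e s; rewrite is_cycleE => /andP[]. Qed.

Lemma sorted_suf (a s : seq (edge G)) : sorted rr (a ++ s) -> sorted rr s.
Proof. by move/cat_sorted2=> []. Qed.

Lemma sorted_pre (a s : seq (edge G)) : sorted rr (a ++ s) -> sorted rr a.
Proof. by move/cat_sorted2=> []. Qed.

Lemma nonuniq_split (s : seq (edge G)) : ~~ uniq s ->
  exists a e b d, s = a ++ e :: b ++ e :: d.
Proof.
elim: s => [|x s IH] //=; rewrite negb_and negbK; case/orP.
  by case/splitPr=> b d; exists [::], x, b, d.
by move/IH=> [a [e [b [d ->]]]]; exists (x :: a), e, b, d.
Qed.

Lemma remove_cycle (a g d : seq (edge G)) :
  sorted rr (a ++ g ++ d) -> is_cycle g -> sorted rr (a ++ d).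
Proof.
case: g => [|x g] // H; rewrite is_cycleE => /andP [_ Hc].
case: a H => [|a0 a]; first by move/sorted_suf/sorted_suf.
case: d => [|d0 d]; first by rewrite !cats0 => /sorted_pre.
rewrite /= !cat_path /= !cat_path /=.
case/and5P=> -> /eqP Ha _ /eqP Hg ->; move: Hc => /eqP Hc.
by rewrite /= andbT /rr Ha -Hc Hg eqxx.
Qed.

Lemma uniq_cycle_infix n (g : seq (edge G)) : size g <= n -> is_cycle g ->
  exists a c d, g = a ++ c ++ d /\ uniq c /\ is_cycle c.
Proof.
elim: n g => [|n IH] g.
  by case: g.
move=> Hs Hc; case Hu: (uniq g).
  by exists [::], g, [::]; rewrite cats0.
have [a [e [b [d E]]]] := @nonuniq_split g (negbT Hu).
have Hc' : is_cycle (e :: b).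
  move: Hc => /cycle_sorted; rewrite E => /sorted_suf H; rewrite is_cycleE.
  move: H; rewrite -cat_cons => H; rewrite (@sorted_pre _ _ H) /=.
  by move: H; rewrite /= cat_path /= => /and3P [_ -> _].
have Hs' : size (e :: b) <= n.
  move: Hs; rewrite E !size_cat /= size_cat /=; lia.
have [a' [c [d' [E' [U C]]]]] := IH _ Hs' Hc'.
exists (a ++ a'), c, (d' ++ e :: d); split=> //.
by rewrite E -cat_cons E' -!catA.
Qed.

Lemma cyc_infix (p : seq (edge G)) : sorted rr p -> ~~ uniq p ->
  exists a c d, p = a ++ c ++ d /\ uniq c /\ is_cycle c.
Proof.
move=> Hp Hu; have [a [e [b [d E]]]] := @nonuniq_split p Hu.
have Hc' : is_cycle (e :: b).
  move: Hp; rewrite E => /sorted_suf H; rewrite is_cycleE.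
  move: H; rewrite -cat_cons => H; rewrite (@sorted_pre _ _ H) /=.
  by move: H; rewrite /= cat_path /= => /and3P [_ -> _].
have [a' [c [d' [E' [U C]]]]] := @uniq_cycle_infix _ _ (leqnn _) Hc'.
exists (a ++ a'), c, (d' ++ e :: d); split=> //.
by rewrite E -cat_cons E' -!catA.
Qed.

Lemma occ_sub_ge x (p : seq (edge G)) (S : {set edge G}) : x <= size p ->
  (forall i, i \in S -> x <= occ p i) -> x <= occ_sub p S.
Proof.
move=> H1 H2; rewrite /occ_sub; elim/big_rec: _ => // i y iS Hy.
by rewrite leq_min H2.
Qed.

Lemma occ_sub_size (p : seq (edge G)) (S : {set edge G}) : occ_sub p S <= size p.
Proof.
rewrite /occ_sub; elim/big_rec: _ => // i y iS Hy.
by rewrite geq_min Hy orbT.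
Qed.

Lemma occ_sub_occ (p : seq (edge G)) (S : {set edge G}) i : i \in S -> occ_sub p S <= occ p i.
Proof.
move=> iS; rewrite /occ_sub; move: (mem_index_enum i).
elim: (index_enum _) => //= j r IHr; rewrite inE big_cons.
case/orP => [/eqP <-|/IHr H]; first by rewrite iS geq_minl.
by case: (j \in S) => //; rewrite geq_min H orbT.
Qed.

Lemma decomp n (p : seq (edge G)) : size p <= n -> sorted rr p ->
  exists f : {set edge G} -> nat,
    (forall S, 0 < f S -> exists g, is_cycle g /\ edge_support g = S) /\
    (forall S, f S <= occ_sub p S) /\
    (forall z, occ p z <= 1 + \sum_S f S).
Proof.
elim: n p => [|n IH] p Hs Hp.
  exists (fun _ => 0); split=> //; split=> // z.
  by move: Hs; rewrite leqn0 => /nilP ->.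
case Hu: (uniq p).
  exists (fun _ => 0); split=> //; split=> // z.
  by rewrite /occ count_uniq_mem //; case: (z \in p).
have [a [c [d [E [U C]]]]] := @cyc_infix p Hp (negbT Hu).
have Hc0 : 0 < size c by case: c C {E U}.
have Hs' : size (a ++ d) <= n.
  by move: Hs; rewrite E !size_cat; lia.
have Hp' : sorted rr (a ++ d) by apply: (@remove_cycle a c d); rewrite -?E.
have [f' [F1 [F2 F3]]] := IH _ Hs' Hp'.
set T := edge_support c.
have occE z : occ p z = occ (a ++ d) z + (z \in c).
  by rewrite /occ E !count_cat (count_uniq_mem _ U); move: (z \in c) => bb; lia.
have sizeE : size p = size (a ++ d) + size c by rewrite E !size_cat; lia.
exists (fun S => f' S + (S == T)); split; [|split].
- move=> S; case: eqP => [->|_]; first by exists c.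
  by rewrite addn0; apply: F1.
- move=> S; case: eqP => [->|_].
    apply: occ_sub_ge.
      by rewrite sizeE; have := F2 T; have := occ_sub_size (a ++ d) T; lia.
    move=> i iT; have ic : i \in c by move: iT; rewrite inE.
    rewrite occE ic.
    by have := F2 T; have := @occ_sub_occ (a ++ d) T i iT; lia.
  rewrite addn0; apply: leq_trans (F2 S) _; apply: occ_sub_ge.
    by rewrite sizeE; have := occ_sub_size (a ++ d) S; lia.
  move=> i iS; rewrite occE; have := @occ_sub_occ (a ++ d) S i iS; lia.
- have s1 : \sum_(S : {set edge G}) ((S == T) : nat) = 1.
    by rewrite (bigD1 T) //= eqxx big1 => [|S /negPf -> //].
  move=> z; rewrite big_split /= s1.
  rewrite occE; have := F3 z; case: (z \in c) => /=; lia.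
Qed.
End S.

Theorem lemma3p7 (G : multigraph) (pi : nat -> seq (edge G)) :
  (forall k, is_path (pi k)) ->
  (exists z : edge G, unbounded (fun k => occ (pi k) z)) ->
  exists gamma : seq (edge G),
    is_cycle gamma /\ unbounded (fun k => occ_sub (pi k) (edge_support gamma)).
Proof.
move=> Hpath [z Hz].
apply: NNPP => Hno.
have HB : forall S : {set edge G}, exists B : nat,
    forall g, is_cycle g -> edge_support g = S -> forall k, occ_sub (pi k) S <= B.
  move=> S; case: (classic (exists g, is_cycle g /\ edge_support g = S)).
    move=> [g [Cg Eg]].
    have : ~ unbounded (fun k => occ_sub (pi k) (edge_support g)).
      by move=> U; apply: Hno; exists g.
    move/NNPP=> [B HBd]; exists B => g' _ _ k; rewrite -Eg; exact: HBd.
  move=> N; exists 0 => g Cg Eg; exfalso; apply: N; by exists g.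
have [B HBf] := fin_all_exists HB.
apply: Hz; exists (1 + \sum_(S : {set edge G}) B S) => k.
have Hp : sorted (@rr G) (pi k) by rewrite -is_pathE.
have [f [F1 [F2 F3]]] := @decomp G _ (pi k) (leqnn _) Hp.
apply: leq_trans (F3 z) _; rewrite leq_add2l; apply: leq_sum => S _.
have [->//|/F1 [g [Cg Eg]]] := posnP (f S).
exact: leq_trans (F2 S) (HBf S g Cg Eg k).
Qed.
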